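(* Let $A \in \mathbb{R}^{n\times n}$ and let $Q, D \in \mathbb{R}^{n\times n}$ be symmetric. Assume that $(A,D)$ is stabilizable and $(Q,A)$ is detectable, and let $P$ be the unique stabilizing solution of $A^T X + XA + Q - XDX = 0$. Let $$H = \begin{bmatrix} A & -D \\ -Q & -A^T\end{bmatrix},\qquad J=\begin{bmatrix}\mathbf{0}_n & I_n\\ -I_n & \mathbf{0}_n\end{bmatrix}.$$ Let $(\mu_j, v_j)$ and $(-\mu_j, v_{-j})$ be two right eigenpairs of $H$, where $\mu_j$ (and hence $-\mu_j$) is a (non-real) complex eigenvalue of $H$ with partial multiplicity $1$. Let $\theta_j := (v_j^T J v_{-j})^{-1}$ and $p_j = \theta_j J v_{-j}$, $q_j = \theta_j J v_j$. Then for any $\Delta\mu_j \in \mathbb{R}$ there exist $\tilde A\in\mathbb{R}^{n\times n}$ and symmetric $\tilde Q,\tilde D\in\mathbb{R}^{n\times n}$ such that $$H + 2\Delta\mu_j\,\mathrm{Re}\!\left(v_j p_j^T + v_{-j} q_j^T\right) = \begin{bmatrix} \tilde A & -\tilde D \\ -\tilde Q & -\tilde A^T\end{bmatrix}.$$ Moreover, if $\frac{\Delta\mu_j}{\mathrm{Re}(\mu_j)} > -1$, then $P$ is the unique stabilizing solution of $\tilde A^T X + X\tilde A + \tilde Q - X\tilde D X = 0$.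
   Context: A solution $X$ of $A^TX+XA+Q-XDX=0$ is stabilizing if $A-DX$ is Hurwitz; such a solution, if it exists, is unique. The partial multiplicity of an eigenvalue refers to the size of a Jordan block for that eigenvalue in the Jordan normal form; partial multiplicity $1$ means the Jordan blocks of that eigenvalue have size $1$. $\mathrm{Re}$ denotes the entrywise real part. The definition of $\theta_j$ presupposes $v_j^TJv_{-j}\neq 0$. *)

(* Defs.v *)
From HB Require Import structures.
From mathcomp Require Import all_boot all_order all_algebra.
From mathcomp Require Import complex.
From mathcomp Require Import reals.

Set Implicit Arguments.
Unset Strict Implicit.
Unset Printing Implicit Defensive.

Import Order.TTheory GRing.Theory Num.Theory.
Local Open Scope ring_scope.

Section Defs.
Variable R : realType.

Definition cmx {m n} (M : 'M[R]_(m, n)) : 'M[R[i]]_(m, n) :=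
  map_mx (fun x => x%:C%C) M.

Definition Remx {m n} (M : 'M[R[i]]_(m, n)) : 'M[R]_(m, n) :=
  map_mx (@complex.Re R) M.

Definition hurwitz {n} (M : 'M[R]_n) : Prop :=
  forall l : R[i], eigenvalue (cmx M) l -> complex.Re l < 0.

Definition stabilizable {n} (A D : 'M[R]_n) : Prop :=
  exists K : 'M[R]_n, hurwitz (A - D *m K).

Definition detectable {n} (Q A : 'M[R]_n) : Prop :=
  exists L : 'M[R]_n, hurwitz (A - L *m Q).

Definition riccati {n} (A Q D X : 'M[R]_n) : Prop :=
  A^T *m X + X *m A + Q - X *m D *m X = 0.

Definition stabilizing_sol {n} (A Q D X : 'M[R]_n) : Prop :=
  riccati A Q D X /\ hurwitz (A - D *m X).

Definition unique_stabilizing_sol {n} (A Q D X : 'M[R]_n) : Prop :=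
  stabilizing_sol A Q D X /\
  forall Y : 'M[R]_n, stabilizing_sol A Q D Y -> Y = X.

Definition hamiltonian {n} (A Q D : 'M[R]_n) : 'M[R]_(n + n) :=
  block_mx A (- D) (- Q) (- A^T).

Definition Jmx {K : nzRingType} n : 'M[K]_(n + n) :=
  block_mx 0 1%:M (- 1%:M) 0.

(* eigenvalue l of M has partial multiplicity 1 (all Jordan blocks of size 1):
   its algebraic multiplicity equals its geometric multiplicity *)
Definition semisimple_eig {n} (M : 'M[R[i]]_n) (l : R[i]) : Prop :=
  mup l (char_poly M) = \rank (eigenspace M l).

End Defs.

(* Main.v *)
Require Import Defs.
From HB Require Import structures.
From mathcomp Require Import all_boot all_order all_algebra.
From mathcomp Require Import complex.
From mathcomp Require Import reals.
From mathcomp Require Import ring lra.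
Import Order.TTheory GRing.Theory Num.Theory.
Local Open Scope ring_scope.
Set Implicit Arguments.
Unset Strict Implicit.
Unset Printing Implicit Defensive.
Lemma cmxE (R : realType) m n (M : 'M[R]_(m, n)) : cmx M = map_mx (real_complex R) M.
Proof. by []. Qed.

Lemma cmxM (R : realType) m n p (M : 'M[R]_(m, n)) (N : 'M[R]_(n, p)) :
  cmx (M *m N) = cmx M *m cmx N.
Proof. by rewrite !cmxE map_mxM. Qed.

Lemma cmxD (R : realType) m n (M N : 'M[R]_(m, n)) : cmx (M + N) = cmx M + cmx N.
Proof. by rewrite !cmxE map_mxD. Qed.

Lemma cmxN (R : realType) m n (M : 'M[R]_(m, n)) : cmx (- M) = - cmx M.
Proof. by rewrite !cmxE map_mxN. Qed.

Lemma cmxB (R : realType) m n (M N : 'M[R]_(m, n)) : cmx (M - N) = cmx M - cmx N.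
Proof. by rewrite !cmxE map_mxB. Qed.

Lemma cmxT (R : realType) m n (M : 'M[R]_(m, n)) : cmx M^T = (cmx M)^T.
Proof. by rewrite !cmxE map_trmx. Qed.

Lemma cmxZ (R : realType) m n (a : R) (M : 'M[R]_(m, n)) : cmx (a *: M) = a%:C%C *: cmx M.
Proof. by apply/matrixP=> i j; rewrite !mxE rmorphM. Qed.

Lemma cmx0 (R : realType) m n : cmx (0 : 'M[R]_(m, n)) = 0.
Proof. by rewrite cmxE map_mx0. Qed.

Lemma cmx1 (R : realType) n : cmx (1%:M : 'M[R]_n) = 1%:M.
Proof. by rewrite cmxE map_mx1. Qed.

Lemma cmx_inj (R : realType) m n (M N : 'M[R]_(m, n)) : cmx M = cmx N -> M = N.
Proof.
move=> h; apply/matrixP=> i j; move/matrixP: h => /(_ i j); rewrite !mxE.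
exact: complexI.
Qed.

Lemma cmx_block (R : realType) m1 m2 n1 n2 (a : 'M[R]_(m1, n1)) (b : 'M[R]_(m1, n2))
  (c : 'M[R]_(m2, n1)) (d : 'M[R]_(m2, n2)) :
  cmx (block_mx a b c d) = block_mx (cmx a) (cmx b) (cmx c) (cmx d).
Proof. by rewrite !cmxE map_block_mx. Qed.

Lemma cmx_row (R : realType) m n1 n2 (a : 'M[R]_(m, n1)) (b : 'M[R]_(m, n2)) :
  cmx (row_mx a b) = row_mx (cmx a) (cmx b).
Proof. by rewrite !cmxE map_row_mx. Qed.

Lemma cmx_col (R : realType) m1 m2 n (a : 'M[R]_(m1, n)) (b : 'M[R]_(m2, n)) :
  cmx (col_mx a b) = col_mx (cmx a) (cmx b).
Proof. by rewrite !cmxE map_col_mx. Qed.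

Definition conjm (R : realType) m n (M : 'M[R[i]]_(m, n)) := map_mx (@conjc R) M.

Lemma conjmM (R : realType) m n p (M : 'M[R[i]]_(m, n)) (N : 'M[R[i]]_(n, p)) :
  conjm (M *m N) = conjm M *m conjm N.
Proof. by rewrite /conjm map_mxM. Qed.

Lemma conjmD (R : realType) m n (M N : 'M[R[i]]_(m, n)) : conjm (M + N) = conjm M + conjm N.
Proof. by rewrite /conjm map_mxD. Qed.

Lemma conjmZ (R : realType) m n (a : R[i]) (M : 'M[R[i]]_(m, n)) :
  conjm (a *: M) = a^*%C *: conjm M.
Proof. by apply/matrixP=> i j; rewrite !mxE rmorphM. Qed.

Lemma conjmT (R : realType) m n (M : 'M[R[i]]_(m, n)) : conjm M^T = (conjm M)^T.
Proof. by rewrite /conjm map_trmx. Qed.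

Lemma conjm_cmx (R : realType) m n (M : 'M[R]_(m, n)) : conjm (cmx M) = cmx M.
Proof. by apply/matrixP=> i j; rewrite !mxE conjc_real. Qed.

Lemma conjm0 (R : realType) m n : conjm (0 : 'M[R[i]]_(m, n)) = 0.
Proof. by rewrite /conjm map_mx0. Qed.

Lemma conjm_eq0 (R : realType) m n (M : 'M[R[i]]_(m, n)) : (conjm M == 0) = (M == 0).
Proof.
apply/eqP/eqP=> [h|->]; last exact: conjm0.
apply/matrixP=> i j; move/matrixP: h => /(_ i j); rewrite !mxE => /eqP.
by rewrite conjc_eq0 => /eqP.
Qed.

Lemma cmx_Remx (R : realType) m n (M : 'M[R[i]]_(m, n)) :
  cmx (Remx M) = 2^-1 *: (M + conjm M).
Proof. by apply/matrixP=> i j; rewrite !mxE ReJ_add mulrC. Qed.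
Lemma char_poly_tr (F : fieldType) n (M : 'M[F]_n) : char_poly M^T = char_poly M.
Proof.
rewrite /char_poly -det_tr; congr (determinant _).
by apply/matrixP=> i j; rewrite !mxE eq_sym.
Qed.

Lemma eigenvalue_tr (F : fieldType) n (M : 'M[F]_n) a : eigenvalue M^T a = eigenvalue M a.
Proof. by rewrite !eigenvalue_root_char char_poly_tr. Qed.

Lemma horner_mx_comm (F : fieldType) n (G H X : 'M[F]_n.+1) (r : {poly F}) :
  G *m X = X *m H -> horner_mx G r *m X = X *m horner_mx H r.
Proof.
move=> e; move: r; apply: poly_ind => [|r c IH].
  by rewrite !rmorph0 mul0mx mulmx0.
rewrite !rmorphD !rmorphM /= !horner_mx_X !horner_mx_C.
rewrite mulmxDl mulmxDr -!mulmxE -mulmxA e mulmxA IH -mulmxA.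
by rewrite mul_scalar_mx mul_mx_scalar.
Qed.

Lemma sylv_gen (F : closedFieldType) n (G H X : 'M[F]_n) :
  (forall l, eigenvalue G l -> ~~ eigenvalue H l) ->
  G *m X = X *m H -> X = 0.
Proof.
case: n G H X => [|n] G H X hE e; first by apply/matrixP=> [[]].
have cp : coprimep (char_poly H) (char_poly G).
  apply: Pdiv.ClosedField.root_coprimep => x rx.
  rewrite -rootE -eigenvalue_root_char.
  apply/negP=> eG; move: (hE x eG); rewrite eigenvalue_root_char rx.
  by [].
have [[u1 u2] /= hb] := Bezout_eq1_coprimepP _ _ cp.
have h1 : horner_mx H (char_poly G) * horner_mx H u2 = 1.
  have := congr1 (horner_mx H) hb.
  rewrite rmorphD !rmorphM /= Cayley_Hamilton mulr0 add0r rmorph1.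
  by rewrite comm_horner_mx2.
have h0 : X *m horner_mx H (char_poly G) = 0.
  by rewrite -(horner_mx_comm _ e) Cayley_Hamilton mul0mx.
have h1' : horner_mx H (char_poly G) *m horner_mx H u2 = 1%:M by rewrite mulmxE h1.
by rewrite -[X]mulmx1 -h1' mulmxA h0 mul0mx.
Qed.
Lemma eigenvalueN (F : fieldType) n (M : 'M[F]_n) l : eigenvalue (- M) l -> eigenvalue M (- l).
Proof.
case/eigenvalueP=> v hv nz; apply/eigenvalueP; exists v => //.
by rewrite scaleNr -hv mulmxN opprK.
Qed.

Lemma ReN (R : realType) (z : R[i]) : complex.Re (- z) = - complex.Re z.
Proof. by case: z. Qed.

Lemma sylv (R : realType) n (M N X : 'M[R]_n) :
  hurwitz M -> hurwitz N -> M^T *m X + X *m N = 0 -> X = 0.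
Proof.
move=> hM hN e; apply: cmx_inj; rewrite cmx0.
apply: (@sylv_gen _ _ (cmx M)^T (- cmx N)).
  move=> l; rewrite eigenvalue_tr => /hM hl; apply/negP => /eigenvalueN /hN.
  by rewrite ReN oppr_lt0 => /(lt_trans hl); rewrite ltxx.
apply/eqP; rewrite mulmxN -subr_eq0 opprK -cmxT -!cmxM -cmxD e cmx0 //.
Qed.
Definition res (R : realType) n (A Q D X : 'M[R]_n) :=
  A^T *m X + X *m A + Q - X *m D *m X.

Lemma res_riccati (R : realType) n (A Q D X : 'M[R]_n) : riccati A Q D X <-> res A Q D X = 0.
Proof. by []. Qed.

Lemma ric_diff (R : realType) n (A Q D X1 X2 : 'M[R]_n) :
  (A^T - X2 *m D) *m (X1 - X2) + (X1 - X2) *m (A - D *m X1)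
  = res A Q D X1 - res A Q D X2.
Proof.
rewrite /res !mulmxBl !mulmxBr !mulmxA.
apply/matrixP=> i j; rewrite !mxE; ring.
Qed.

Lemma ham_LR (R : realType) n (A Q D X : 'M[R]_n) :
  row_mx (- X) 1%:M *m hamiltonian A Q D *m col_mx 1%:M X = - res A Q D X.
Proof.
rewrite /hamiltonian mul_row_block mul_row_col /res.
rewrite !mul1mx !mulmx1 !mulmxN !mulNmx !opprK !mulmxDl -!mulmxA !mulNmx.
apply/matrixP=> i j; rewrite !mxE; ring.
Qed.

Lemma ham_UR (R : realType) n (A Q D X : 'M[R]_n) :
  row_mx 1%:M 0 *m hamiltonian A Q D *m col_mx 1%:M X = A - D *m X.
Proof.
rewrite /hamiltonian mul_row_block mul_row_col.
by rewrite !mul1mx !mul0mx !addr0 mulmx1 mulNmx.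
Qed.
Lemma ReD (R : realType) (z w : R[i]) : complex.Re (z + w) = complex.Re z + complex.Re w.
Proof. by case: z; case: w. Qed.

Lemma ReJ (R : realType) (z : R[i]) : complex.Re (z^*)%C = complex.Re z.
Proof. by case: z. Qed.

Lemma Re_real (R : realType) (a : R) : complex.Re (a%:C)%C = a.
Proof. by []. Qed.

Lemma subJ_neq0 (R : realType) (z : R[i]) : complex.Im z != 0 -> z - z^*%C != 0.
Proof.
case: z => a b /= hb; apply/negP => /eqP h.
move: h => /eqP; rewrite eq_complex /= => /andP [_ /eqP h].
have hb0 : b = 0.
  by move: h; rewrite opprK -mulr2n => /eqP; rewrite mulrn_eq0 /= => /eqP.
by move: hb; rewrite hb0 eqxx.
Qed.

Lemma pert_hurwitz (R : realType) n (Acl B : 'M[R]_n) (x y : 'cV[R[i]]_n) (lam : R[i]) (s dmu : R) :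
  hurwitz Acl ->
  cmx Acl *m x = lam *: x -> y^T *m cmx Acl = lam *: y^T -> y^T *m x = (s%:C%C)%:M ->
  complex.Im lam != 0 -> complex.Re lam + dmu * s < 0 ->
  cmx B = cmx Acl + dmu%:C%C *: (x *m y^T + conjm (x *m y^T)) -> hurwitz B.
Proof.
move=> hA hx hy hyx him hre hB l /eigenvalueP [z hz nz].
have hy' : (conjm y)^T *m cmx Acl = lam^*%C *: (conjm y)^T.
  by rewrite -conjmT -(conjm_cmx Acl) -conjmM hy conjmZ.
have hyx' : (conjm y)^T *m x = 0.
  have e : (lam - lam^*%C) *: ((conjm y)^T *m x) = 0.
    by rewrite scalerBl {1}scalemxAr -hx mulmxA hy' -scalemxAl subrr.
  by move/eqP: e; rewrite scaler_eq0 (negbTE (subJ_neq0 him)) /= => /eqP.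
have hBx : cmx B *m x = (lam + (dmu * s)%:C%C) *: x.
  rewrite hB mulmxDl hx -scalemxAl mulmxDl -mulmxA hyx conjmM conjmT -mulmxA.
  rewrite hyx' mulmx0 addr0 mul_mx_scalar scalerA scalerDl.
  by rewrite -rmorphM.
have hBx' : cmx B *m conjm x = (lam + (dmu * s)%:C%C)^*%C *: conjm x.
  by rewrite -(conjm_cmx B) -conjmM hBx conjmZ.
have key : forall w : 'cV[R[i]]_n, forall c : R[i], cmx B *m w = c *: w ->
    complex.Re c < 0 -> z *m w != 0 -> complex.Re l < 0.
  move=> w c hw hc nzw.
  have e : (l - c) *: (z *m w) = 0.
    by rewrite scalerBl {1}scalemxAl -hz -mulmxA hw -scalemxAr subrr.
  move/eqP: e; rewrite scaler_eq0 (negbTE nzw) orbF subr_eq0 => /eqP ->.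
  exact: hc.
have hre' : complex.Re (lam + (dmu * s)%:C%C) < 0 by rewrite ReD Re_real.
case: (eqVneq (z *m x) 0) => zx; last exact: key hBx hre' zx.
case: (eqVneq (z *m conjm x) 0) => zx'; last by apply: key hBx' _ zx'; rewrite ReJ.
apply: hA; apply/eigenvalueP; exists z => //.
rewrite -hz hB mulmxDr -scalemxAr mulmxDr mulmxA zx mul0mx add0r.
by rewrite conjmM mulmxA zx' mul0mx scaler0 addr0.
Qed.
Definition Lm (F : nzRingType) n (P : 'M[F]_n) : 'M[F]_(n, n + n) := row_mx (- P) 1%:M.
Definition Rm (F : nzRingType) n (P : 'M[F]_n) : 'M[F]_(n + n, n) := col_mx 1%:M P.
Definition Um (F : nzRingType) n : 'M[F]_(n, n + n) := row_mx 1%:M 0.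
Arguments Um {F} n.

Lemma decomp (F : fieldType) n (P : 'M[F]_n) (x : 'cV[F]_(n + n)) :
  Lm P *m x = 0 -> x = Rm P *m (Um n *m x).
Proof.
rewrite -[x]vsubmxK /Lm /Um /Rm !mul_row_col mul_col_mx !mul1mx mul0mx addr0 mulNmx.
by move/eqP; rewrite addrC subr_eq0 => /eqP ->.
Qed.

Lemma UR (F : fieldType) n (P : 'M[F]_n) : Um n *m Rm P = 1%:M.
Proof. by rewrite /Um /Rm mul_row_col mul1mx mul0mx addr0. Qed.

Lemma L_eig (F : fieldType) n (Hc : 'M[F]_(n + n)) (Acl P : 'M[F]_n) (b : 'cV_(n + n)) m :
  Lm P *m Hc = - Acl^T *m Lm P -> Hc *m b = m *: b ->
  (Lm P *m b)^T *m Acl = (- m) *: (Lm P *m b)^T.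
Proof.
move=> hL hb.
have e : Acl^T *m (Lm P *m b) = (- m) *: (Lm P *m b).
  have e1 : (- Acl^T) *m (Lm P *m b) = m *: (Lm P *m b).
    by rewrite mulmxA -hL -mulmxA hb scalemxAr.
  by rewrite scaleNr -e1 mulNmx opprK.
by rewrite -[Acl in LHS]trmxK -trmx_mul e linearZ.
Qed.

Lemma side (F : fieldType) n (Hc : 'M[F]_(n + n)) (Acl P : 'M[F]_n) (a b : 'cV_(n + n)) lam k :
  Hc *m Rm P = Rm P *m Acl -> Lm P *m Hc = - Acl^T *m Lm P -> (Rm P)^T *m Jmx n = Lm P ->
  Hc *m a = lam *: a -> Hc *m b = (- lam) *: b -> Lm P *m a = 0 ->
  a^T *m Jmx n *m b = k%:M -> k != 0 ->
  [/\ Acl *m (Um n *m a) = lam *: (Um n *m a), (Lm P *m b)^T *m Acl = lam *: (Lm P *m b)^T,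
      (Um n *m a)^T *m (Lm P *m b) = k%:M & Lm P *m b != 0].
Proof.
move=> hR hL hJ ha hb hLa hk nk.
have ea := decomp hLa.
have h3 : (Um n *m a)^T *m (Lm P *m b) = k%:M.
  by rewrite -hk [a in RHS]ea [(Rm P *m _)^T]trmx_mul -hJ !mulmxA.
split => //.
- rewrite -[Acl *m _]mul1mx -(UR P) -!mulmxA (mulmxA (Rm P)) -hR -mulmxA -ea.
  by rewrite ha scalemxAr.
- by rewrite (L_eig hL hb) opprK.
- apply/eqP => e; move: h3; rewrite e mulmx0 => /matrixP /(_ 0 0).
  rewrite !mxE /= => /esym/eqP; rewrite mulr1n (negbTE nk) //.
Qed.
Lemma res_tr (R : realType) n (A Q D X : 'M[R]_n) :
  Q^T = Q -> D^T = D -> res A Q D X^T = (res A Q D X)^T.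
Proof.
move=> sQ sD; rewrite /res !raddfB /= !raddfD /= !trmx_mul !trmxK sQ sD.
by rewrite mulmxA (addrC (X^T *m A)).
Qed.

Lemma J_tr (F : comNzRingType) n : (Jmx n : 'M[F]_(n + n))^T = - Jmx n.
Proof.
by rewrite /Jmx tr_block_mx !trmx0 tr_scalar_mx raddfN /= tr_scalar_mx opp_block_mx !oppr0 opprK.
Qed.

Lemma RJ (F : comNzRingType) n (P : 'M[F]_n) : P^T = P -> (Rm P)^T *m Jmx n = Lm P.
Proof.
move=> sP; rewrite /Rm /Lm /Jmx tr_col_mx tr_scalar_mx sP mul_row_block.
by rewrite !mulmx0 !mul1mx mulmxN mulmx1 add0r addr0.
Qed.

Lemma JR (F : comNzRingType) n (P : 'M[F]_n) (x : 'cV[F]_(n + n)) : P^T = P ->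
  (Jmx n *m x)^T *m Rm P = (Lm P *m x)^T.
Proof.
by move=> sP; rewrite -(RJ sP) !trmx_mul trmxK mulmxA.
Qed.

Lemma cmx_Lm (R : realType) n (P : 'M[R]_n) : cmx (Lm P) = Lm (cmx P).
Proof. by rewrite /Lm cmx_row cmxN cmx1. Qed.

Lemma cmx_Rm (R : realType) n (P : 'M[R]_n) : cmx (Rm P) = Rm (cmx P).
Proof. by rewrite /Rm cmx_col cmx1. Qed.

Lemma cmx_Um (R : realType) n : cmx (Um n : 'M[R]_(n, n + n)) = Um n.
Proof. by rewrite /Um cmx_row cmx1 cmx0. Qed.

Lemma cmx_J (R : realType) n : cmx (Jmx n : 'M[R]_(n + n)) = Jmx n.
Proof. by rewrite /Jmx cmx_block cmx0 cmxN cmx1. Qed.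

Lemma HR (R : realType) n (A Q D P : 'M[R]_n) : res A Q D P = 0 ->
  hamiltonian A Q D *m Rm P = Rm P *m (A - D *m P).
Proof.
move=> r.
have hQ : Q = P *m D *m P - A^T *m P - P *m A.
  rewrite -[Q]subr0 -r /res; apply/matrixP=> i j; rewrite !mxE; ring.
rewrite /hamiltonian /Rm mul_block_col mul_col_mx !mulmx1 mul1mx hQ.
congr col_mx; rewrite ?mulNmx ?mulmxBr ?mulmxA //; apply/matrixP=> i j; rewrite !mxE; ring.
Qed.

Lemma LH (R : realType) n (A Q D P : 'M[R]_n) : res A Q D P = 0 -> P^T = P -> D^T = D ->
  Lm P *m hamiltonian A Q D = - (A - D *m P)^T *m Lm P.
Proof.
move=> r sP sD.
have hQ : Q = P *m D *m P - A^T *m P - P *m A.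
  rewrite -[Q]subr0 -r /res; apply/matrixP=> i j; rewrite !mxE; ring.
have eT : (A - D *m P)^T = A^T - P *m D by rewrite raddfB /= trmx_mul sP sD.
rewrite eT /hamiltonian /Lm mul_row_block mul_mx_row hQ.
rewrite !mulmx1 !mulNmx !mulmxN !mul1mx.
congr row_mx; rewrite ?mulNmx ?mulmxBl ?mulmxBr ?mulmxA //; apply/matrixP=> i j; rewrite !mxE; ring.
Qed.
Lemma K_SJ (F : comNzRingType) n (v vm : 'cV[F]_(n + n)) th :
  v *m (th *: (Jmx n *m vm))^T + vm *m (th *: (Jmx n *m v))^T
  = (- th *: (v *m vm^T + vm *m v^T)) *m Jmx n.
Proof.
rewrite !linearZ /= !trmx_mul J_tr !mulmxN !mulmxA -scalemxAl mulmxDl.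
by rewrite scaleNr !scalerN scalerDr opprD.
Qed.

Lemma KW (F : comNzRingType) m n (P : 'M[F]_n) (W : 'M[F]_(m, n + n)) (v vm : 'cV[F]_(n + n)) th :
  P^T = P ->
  W *m (v *m (th *: (Jmx n *m vm))^T + vm *m (th *: (Jmx n *m v))^T) *m Rm P
  = th *: (W *m v *m (Lm P *m vm)^T + W *m vm *m (Lm P *m v)^T).
Proof.
move=> sP; rewrite mulmxDr mulmxDl -!mulmxA !linearZ /= -!scalemxAl -!scalemxAr.
by rewrite !(JR _ sP) scalerDr !mulmxA.
Qed.

Lemma Re_sum (R : realType) (I : finType) (f : I -> R[i]) :
  complex.Re (\sum_i f i) = \sum_i complex.Re (f i).
Proof.
by apply: (big_morph (@complex.Re R)) => [x y|]; [exact: ReD|].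
Qed.

Lemma Remx_mulR (R : realType) m n p (S : 'M[R[i]]_(m, n)) (M : 'M[R]_(n, p)) :
  Remx (S *m cmx M) = Remx S *m M.
Proof.
apply/matrixP=> i j; rewrite !mxE Re_sum; apply: eq_bigr => k _.
by rewrite !mxE; case: (S i k) => a b /=; rewrite mulr0 subr0.
Qed.

Lemma Remx_tr (R : realType) m n (S : 'M[R[i]]_(m, n)) : Remx S^T = (Remx S)^T.
Proof. by rewrite /Remx map_trmx. Qed.

Lemma ham_pert (R : realType) n (A Q D : 'M[R]_n) (SR : 'M[R]_(n + n)) (k : R) :
  SR^T = SR -> Q^T = Q -> D^T = D ->
  exists At Qt Dt : 'M[R]_n, [/\ Qt^T = Qt, Dt^T = Dt &
     hamiltonian A Q D + k *: (SR *m Jmx n) = hamiltonian At Qt Dt].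
Proof.
move=> sS sQ sD.
move: sS; rewrite -[SR]submxK.
set S11 := ulsubmx SR; set S12 := ursubmx SR; set S21 := dlsubmx SR; set S22 := drsubmx SR.
rewrite tr_block_mx => /eq_block_mx [e11 e21 e12 e22].
exists (A - k *: S12), (Q + k *: S22), (D - k *: S11); split.
- by rewrite raddfD /= linearZ /= e22 sQ.
- by rewrite raddfB /= linearZ /= e11 sD.
rewrite /hamiltonian /Jmx mulmx_block !mulmx0 !mulmx1 !mulmxN !mulmx1 !add0r !addr0.
rewrite scale_block_mx add_block_mx.
congr block_mx; first [ done | by rewrite scalerN | by rewrite opprB addrC |
  by rewrite opprD scalerN | by rewrite raddfB /= linearZ /= e12 opprB addrC | idtac ].
Qed.
Lemma finish (R : realType) n (A Q D P At Qt Dt : 'M[R]_n) (E2 : 'M[R]_(n + n)) :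
  res A Q D P = 0 -> Dt^T = Dt -> P^T = P ->
  hamiltonian A Q D + E2 = hamiltonian At Qt Dt -> Lm P *m E2 *m Rm P = 0 ->
  hurwitz (A - D *m P + Um n *m E2 *m Rm P) -> unique_stabilizing_sol At Qt Dt P.
Proof.
move=> rP sDt sP hH hL hB.
have rt : res At Qt Dt P = 0.
  apply/eqP; rewrite -oppr_eq0 -(ham_LR At Qt Dt P) -hH mulmxDr mulmxDl hL addr0 ham_LR rP.
  by rewrite oppr0.
have eB : At - Dt *m P = A - D *m P + Um n *m E2 *m Rm P.
  by rewrite -(ham_UR At Qt Dt P) -hH mulmxDr mulmxDl ham_UR.
have hBt : hurwitz (At - Dt *m P) by rewrite eB.
split; first by split.
move=> Y [rY hY].
have e : (At - Dt *m P)^T *m (Y - P) + (Y - P) *m (At - Dt *m Y) = 0.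
  have eT : (At - Dt *m P)^T = At^T - P *m Dt by rewrite raddfB /= trmx_mul sP sDt.
  by rewrite eT (ric_diff _ Qt); move: rY; rewrite /riccati -/(res _ _ _ _) => ->; rewrite rt subrr.
by move: (sylv hBt hY e) => /eqP; rewrite subr_eq0 => /eqP.
Qed.

Unset Implicit Arguments.
Set Strict Implicit.
Set Printing Implicit Defensive.

Theorem theorem2 (R : realType) (n : nat) (A Q D P : 'M[R]_n)
  (symQ : Q^T = Q) (symD : D^T = D)
  (hstab : stabilizable A D) (hdet : detectable Q A)
  (hP : unique_stabilizing_sol A Q D P)
  (mu : R[i]) (v vm : 'cV[R[i]]_(n + n))
  (mu_nonreal : complex.Im mu != 0)
  (hv : v != 0) (hvE : cmx (hamiltonian A Q D) *m v = mu *: v)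
  (hvm : vm != 0) (hvmE : cmx (hamiltonian A Q D) *m vm = (- mu) *: vm)
  (hmult : semisimple_eig (cmx (hamiltonian A Q D)) mu)
  (hpair : (v^T *m Jmx n *m vm) 0 0 != 0)
  (dmu : R) :
  let theta := ((v^T *m Jmx n *m vm) 0 0)^-1 in
  let p := theta *: (Jmx n *m vm) in
  let q := theta *: (Jmx n *m v) in
  exists At Qt Dt : 'M[R]_n,
    [/\ Qt^T = Qt, Dt^T = Dt,
        hamiltonian A Q D + (2 * dmu) *: Remx (v *m p^T + vm *m q^T)
          = hamiltonian At Qt Dt
      & dmu / complex.Re mu > -1 -> unique_stabilizing_sol At Qt Dt P].
Proof.
move=> theta p q.
have [[ricP hurP] _] := hP.
have rP : res A Q D P = 0 := ricP.
have symP : P^T = P.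
  have e : (A - D *m P)^T *m (P - P^T) + (P - P^T) *m (A - D *m P) = 0.
    have eT : (A - D *m P)^T = A^T - P^T *m D by rewrite raddfB /= trmx_mul symD.
    by rewrite eT (ric_diff _ Q) rP (res_tr _ _ symQ symD) rP trmx0 subr0.
  by move: (sylv hurP hurP e) => /eqP; rewrite subr_eq0 => /eqP /esym.
set KK := v *m p^T + vm *m q^T.
set S := - theta *: (v *m vm^T + vm *m v^T).
have hK : KK = S *m Jmx n by rewrite /KK /S /p /q K_SJ.
have sS : S^T = S by rewrite /S linearZ /= raddfD /= !trmx_mul !trmxK addrC.
have hRe : Remx KK = Remx S *m Jmx n by rewrite hK -cmx_J Remx_mulR.
have sSR : (Remx S)^T = Remx S by rewrite -Remx_tr sS.
have [At [Qt [Dt [sQt sDt hH]]]] := ham_pert A (2 * dmu) sSR symQ symD.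
exists At, Qt, Dt; split; [exact: sQt | exact: sDt | by rewrite hRe | move=> hdmu].
rewrite -hRe in hH.
set E := (2 * dmu) *: Remx KK in hH *.
set Pc := cmx P.
set Hc := cmx (hamiltonian A Q D).
set Acl := A - D *m P.
have sPc : Pc^T = Pc by rewrite /Pc -cmxT symP.
have hR : Hc *m Rm Pc = Rm Pc *m cmx Acl by rewrite /Hc /Pc -cmx_Rm -!cmxM HR.
have hL : Lm Pc *m Hc = - (cmx Acl)^T *m Lm Pc.
  by rewrite /Hc /Pc -cmx_Lm -cmxM (LH rP symP symD) cmxM cmxN cmxT.
have hJ : (Rm Pc)^T *m Jmx n = Lm Pc := RJ sPc.
have cE : cmx E = dmu%:C%C *: (KK + conjm KK).
  rewrite /E cmxZ cmx_Remx scalerA; congr (_ *: _).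
  by rewrite rmorphM /= rmorph_nat mulrAC mulfV ?mul1r // pnatr_eq0.
have cWE : forall m (W : 'M[R]_(m, n + n)),
  cmx (W *m E *m Rm P) = dmu%:C%C *: (cmx W *m KK *m Rm Pc + conjm (cmx W *m KK *m Rm Pc)).
  move=> m W; rewrite !cmxM cE -cmx_Rm -scalemxAr -scalemxAl mulmxDr mulmxDl !conjmM !conjm_cmx.
  done.
have KWc : forall m (W : 'M[R]_(m, n + n)),
  cmx W *m KK *m Rm Pc = theta *: (cmx W *m v *m (Lm Pc *m vm)^T + cmx W *m vm *m (Lm Pc *m v)^T).
  move=> m W; exact: KW.
set k := (v^T *m Jmx n *m vm) 0 0.
have hk : v^T *m Jmx n *m vm = k%:M by apply: mx11_scalar.
have thk : theta * k = 1 by rewrite mulVf.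
have fin : Lm P *m E *m Rm P = 0 -> hurwitz (Acl + Um n *m E *m Rm P) ->
    unique_stabilizing_sol At Qt Dt P.
  exact: (finish rP sDt symP hH).
have cU : cmx (Um n : 'M[R]_(n, n + n)) = Um n := cmx_Um R n.
have cL : cmx (Lm P) = Lm Pc := cmx_Lm P.
have t11 : forall M : 'M[R[i]]_1, M^T = M by move=> M; rewrite [M]mx11_scalar tr_scalar_mx.
case: (eqVneq (Lm Pc *m v) 0) => hLv.
- have [e1 e2 e3 e4] := side hR hL hJ hvE hvmE hLv hk hpair.
  have remu : complex.Re mu < 0.
    by apply: hurP; apply/eigenvalueP; exists (Lm Pc *m vm)^T => //; rewrite trmx_eq0.
  apply: fin.
  + apply: cmx_inj; rewrite cWE KWc cL hLv !mul0mx trmx0 mulmx0 add0r scaler0.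
    by rewrite conjm0 addr0 scaler0 cmx0.
  apply: (@pert_hurwitz _ _ Acl _ (Um n *m v) (theta *: (Lm Pc *m vm)) mu 1 dmu hurP e1).
  + by rewrite linearZ /= -scalemxAl e2 scalerA mulrC -scalerA.
  + rewrite linearZ /= -scalemxAl -[(Lm Pc *m vm)^T *m _]t11 trmx_mul trmxK e3.
    by rewrite scale_scalar_mx thk rmorph1.
  + exact: mu_nonreal.
  + by move: hdmu; rewrite ltr_ndivlMr // mulr1 => h; lra.
  by rewrite cmxD cWE KWc cU hLv trmx0 mulmx0 addr0 linearZ /= -scalemxAr.
have e0 := L_eig hL hvE.
have remu : 0 < complex.Re mu.
  have h : complex.Re (- mu) < 0.
    by apply: hurP; apply/eigenvalueP; exists (Lm Pc *m v)^T => //; rewrite trmx_eq0.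
  by move: h; rewrite ReN oppr_lt0.
have hLvm : Lm Pc *m vm = 0.
  apply/eqP; apply: contraT => nz.
  have e5 := L_eig hL hvmE.
  have h : complex.Re mu < 0.
    apply: hurP; apply/eigenvalueP; exists (Lm Pc *m vm)^T.
      by rewrite e5 opprK.
    by rewrite trmx_eq0.
  by move: (lt_trans h remu); rewrite ltxx.
have hk' : vm^T *m Jmx n *m v = (- k)%:M.
  rewrite -[vm^T *m _ *m v]t11 !trmx_mul !trmxK J_tr mulNmx mulmxN mulmxA hk.
  by rewrite raddfN.
have hvE' : Hc *m v = (- - mu) *: v by rewrite opprK.
have nk : - k != 0 by rewrite oppr_eq0.
have [e1 e2 e3 e4] := side hR hL hJ hvmE hvE' hLvm hk' nk.
apply: fin.
+ apply: cmx_inj; rewrite cWE KWc cL hLvm !mul0mx trmx0 mulmx0 addr0 scaler0.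
  by rewrite conjm0 addr0 scaler0 cmx0.
apply: (@pert_hurwitz _ _ Acl _ (Um n *m vm) (theta *: (Lm Pc *m v)) (- mu) (-1) dmu hurP e1).
+ by rewrite linearZ /= -scalemxAl e2 scalerA mulrC -scalerA.
+ rewrite linearZ /= -scalemxAl -[(Lm Pc *m v)^T *m _]t11 trmx_mul trmxK e3.
  by rewrite scale_scalar_mx mulrN thk (rmorphN (real_complex R)) rmorph1.
+ have -> : complex.Im (- mu) = - complex.Im mu by case: (mu).
  by rewrite oppr_eq0.
+ by move: hdmu; rewrite ltr_pdivlMr // ReN => h; lra.
by rewrite cmxD cWE KWc cU hLvm trmx0 mulmx0 add0r linearZ /= -scalemxAr.
Qed.
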